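(* Let $\boldsymbol\gamma\in(0,\infty)^B$ and parameters $0<\alpha<\beta$, $\kappa>0$, $a\in\mathbb R$ with $\kappa\log_2\alpha+a=\log_2(1+\alpha)$ and $\kappa(1+\alpha)\le\alpha$; define $I^{\rm ref}(\rho)=\log_2(1+\rho)$ for $0\le\rho\le\alpha$, $\kappa\log_2\rho+a$ for $\alpha<\rho\le\beta$, and $\kappa\log_2\beta+a$ for $\rho>\beta$. Let $0<R<\kappa\log_2\beta+a$. The problem \[ \text{minimize }\frac1B\sum_{b=1}^B\wp_b\quad\text{subject to}\quad\frac1B\sum_{b=1}^BI^{\rm ref}(\wp_b\gamma_b)\ge R,\ \wp_b\ge0, \] is solved by \[ \wp_b=\begin{cases}\beta/\gamma_b,&\eta\ge\frac{\beta}{\kappa\gamma_b},\\ \kappa\eta,&\frac{\alpha}{\kappa\gamma_b}<\eta<\frac{\beta}{\kappa\gamma_b},\\ \alpha/\gamma_b,&\frac{\alpha+1}{\gamma_b}\le\eta\le\frac{\alpha}{\kappa\gamma_b},\\ \eta-1/\gamma_b,&\frac1{\gamma_b}\le\eta<\frac{\alpha+1}{\gamma_b},\\ 0,&\text{otherwise},\end{cases} \] where $\eta$ is chosen such that $\sum_{b=1}^BI^{\rm ref}(\wp_b\gamma_b)=BR$.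
   Context: $I^{\rm ref}$ is a piecewise approximation (refined truncated water-filling) of a discrete-input mutual information curve; the condition $\kappa(1+\alpha)\le\alpha$ ensures that its slope does not increase at $\rho=\alpha$. *)

(* Defs.v *)
From Stdlib Require Import Reals Lra.
Open Scope R_scope.

Definition log2 (x : R) : R := ln x / ln 2.

Fixpoint rsum (n : nat) (f : nat -> R) : R :=
  match n with
  | O => 0
  | S m => rsum m f + f m
  end.

Definition Iref (alpha beta kappa a rho : R) : R :=
  if Rle_dec rho alpha then log2 (1 + rho)
  else if Rle_dec rho beta then kappa * log2 rho + a
  else kappa * log2 beta + a.

Definition wp_alloc (alpha beta kappa g eta : R) : R :=
  if Rle_dec (beta / (kappa * g)) eta then beta / g
  else if Rlt_dec (alpha / (kappa * g)) eta then kappa * eta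
  else if Rle_dec ((alpha + 1) / g) eta then alpha / g
  else if Rle_dec (1 / g) eta then eta - 1 / g
  else 0.

(* Main.v *)
Require Import Defs.
From Stdlib Require Import Reals Lra Psatz.
Open Scope R_scope.

Lemma ln_tan (y z : R) : 0 < y -> 0 < z -> z * (ln y - ln z) <= y - z.
Proof.
  intros Hy Hz.
  pose proof (exp_ineq1_le (ln (y / z))) as H.
  assert (Hq : 0 < y / z) by (apply Rdiv_lt_0_compat; lra).
  rewrite exp_ln in H by exact Hq.
  unfold Rdiv in H. rewrite ln_mult in H by (try apply Rinv_0_lt_compat; lra).
  rewrite ln_Rinv in H by lra.
  assert (E : z * (y * / z) = y) by (field; lra).
  nra.
Qed.

Lemma ln2_pos : 0 < ln 2.
Proof. rewrite <- ln_1. apply ln_increasing; lra. Qed.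

Lemma ln_pos_ge (x : R) : 1 <= x -> 0 <= ln x.
Proof.
  intros H. destruct (Req_dec x 1) as [->|Hn].
  - rewrite ln_1; lra.
  - left. rewrite <- ln_1. apply ln_increasing; lra.
Qed.

Lemma ln_le_mono (x y : R) : 0 < x -> x <= y -> ln x <= ln y.
Proof.
  intros Hx H. destruct (Req_dec x y) as [->|Hn]; [lra|].
  left. apply ln_increasing; lra.
Qed.

Lemma Iref_1 al be ka a r : r <= al -> ln 2 * Iref al be ka a r = ln (1 + r).
Proof.
  intros H. unfold Iref, log2. destruct (Rle_dec r al); [|lra].
  pose proof ln2_pos. field. lra.
Qed.

Lemma Iref_2 al be ka a r : al < r -> r <= be ->
  ln 2 * Iref al be ka a r = ka * ln r + ln 2 * a.
Proof.
  intros H1 H2. unfold Iref, log2. destruct (Rle_dec r al); [lra|].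
  destruct (Rle_dec r be); [|lra].
  pose proof ln2_pos. field. lra.
Qed.

Lemma Iref_3 al be ka a r : al < be -> be < r ->
  ln 2 * Iref al be ka a r = ka * ln be + ln 2 * a.
Proof.
  intros H0 H1. unfold Iref, log2. destruct (Rle_dec r al); [lra|].
  destruct (Rle_dec r be); [lra|].
  pose proof ln2_pos. field. lra.
Qed.

Lemma B2 al be ka a r r0 : 0 < al -> al < be -> 0 < ka -> ka * (1 + al) <= al ->
  ln 2 * a = ln (1 + al) - ka * ln al -> 0 <= r -> al <= r0 ->
  r0 * (ln 2 * Iref al be ka a r - ln 2 * a - ka * ln r0) <= ka * (r - r0).
Proof.
  intros Hal Hab Hk Hs hA Hr Hr0.
  destruct (Rle_dec r al) as [H1|H1].
  - rewrite Iref_1 by lra. rewrite hA.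
    pose proof (ln_tan (1 + r) (1 + al) ltac:(lra) ltac:(lra)) as T1.
    pose proof (ln_tan al r0 ltac:(lra) ltac:(lra)) as T2.
    set (X := ln (1 + r) - ln (1 + al)) in *.
    set (Y := ln al - ln r0) in *.
    assert (E : r0 * (ln (1 + r) - (ln (1 + al) - ka * ln al) - ka * ln r0)
               = r0 * X + ka * (r0 * Y)) by (unfold X, Y; ring).
    rewrite E.
    assert (K1 : ka * (r0 * Y) <= ka * (al - r0)) by (apply Rmult_le_compat_l; lra).
    assert (K2 : (1 + al) * (r0 * X) <= (1 + al) * (ka * (r - al))).
    { assert (r0 * ((1 + al) * X) <= r0 * (r - al)) by (apply Rmult_le_compat_l; lra).
      assert (r0 * (r - al) <= ka * (1 + al) * (r - al)) by nra.
      nra. }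
    assert (K3 : r0 * X <= ka * (r - al)).
    { apply (Rmult_le_reg_l (1 + al)); lra. }
    nra.
  - destruct (Rle_dec r be) as [H2|H2].
    + rewrite Iref_2 by lra.
      pose proof (ln_tan r r0 ltac:(lra) ltac:(lra)) as T.
      assert (ka * (r0 * (ln r - ln r0)) <= ka * (r - r0)) by (apply Rmult_le_compat_l; lra).
      nra.
    + rewrite Iref_3 by lra.
      pose proof (ln_tan be r0 ltac:(lra) ltac:(lra)) as T.
      assert (ka * (r0 * (ln be - ln r0)) <= ka * (be - r0)) by (apply Rmult_le_compat_l; lra).
      nra.
Qed.

Lemma B3 al be ka a r u : 0 < al -> al < be -> 0 < ka -> ka * (1 + al) <= al ->
  ln 2 * a = ln (1 + al) - ka * ln al -> 0 <= r -> 0 <= u -> u <= al ->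
  (1 + u) * (ln 2 * Iref al be ka a r - ln (1 + u)) <= r - u.
Proof.
  intros Hal Hab Hk Hs hA Hr Hu Hua.
  destruct (Rle_dec r al) as [H1|H1].
  - rewrite Iref_1 by lra.
    pose proof (ln_tan (1 + r) (1 + u) ltac:(lra) ltac:(lra)). lra.
  - pose proof (B2 al be ka a r al Hal Hab Hk Hs hA Hr (Rle_refl _)) as HB.
    set (Z := ln 2 * Iref al be ka a r - ln (1 + al)).
    assert (HZ : al * Z <= ka * (r - al)) by (unfold Z; rewrite hA in HB; nra).
    assert (HZ2 : (1 + al) * Z <= r - al).
    { apply (Rmult_le_reg_l al); [lra|].
      assert (al * ((1 + al) * Z) = (1 + al) * (al * Z)) by ring.
      assert ((1 + al) * (al * Z) <= (1 + al) * (ka * (r - al)))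
        by (apply Rmult_le_compat_l; lra).
      nra. }
    pose proof (ln_tan (1 + al) (1 + u) ltac:(lra) ltac:(lra)) as T.
    assert (E : (1 + u) * (ln 2 * Iref al be ka a r - ln (1 + u))
      = (1 + u) * Z + (1 + u) * (ln (1 + al) - ln (1 + u))) by (unfold Z; ring).
    rewrite E.
    destruct (Rle_dec Z 0).
    + assert ((1 + u) * Z <= 0) by nra. lra.
    + assert ((1 + u) * Z <= (1 + al) * Z) by nra. lra.
Qed.

Lemma Iref_nonneg al be ka a r : 0 < al -> al < be -> 0 < ka ->
  ln 2 * a = ln (1 + al) - ka * ln al -> 0 <= r -> 0 <= ln 2 * Iref al be ka a r.
Proof.
  intros Hal Hab Hk hA Hr.
  pose proof (ln_pos_ge (1 + al) ltac:(lra)).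
  destruct (Rle_dec r al) as [H1|H1].
  - rewrite Iref_1 by lra. apply ln_pos_ge; lra.
  - destruct (Rle_dec r be) as [H2|H2].
    + rewrite Iref_2 by lra. rewrite hA.
      pose proof (ln_le_mono al r ltac:(lra) ltac:(lra)). nra.
    + rewrite Iref_3 by lra. rewrite hA.
      pose proof (ln_le_mono al be ltac:(lra) ltac:(lra)). nra.
Qed.

Lemma divle (x y c : R) : 0 < c -> (x / c <= y <-> x <= c * y).
Proof.
  intros Hc. split; intros H.
  - assert (E : x = c * (x / c)) by (field; lra). rewrite E.
    apply Rmult_le_compat_l; lra.
  - assert (E : y = (c * y) / c) by (field; lra). rewrite E.
    unfold Rdiv. apply Rmult_le_compat_r; [left; apply Rinv_0_lt_compat; lra|lra].
Qed.

Lemma divlt (x y c : R) : 0 < c -> (x / c < y <-> x < c * y).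
Proof.
  intros Hc. split; intros H.
  - assert (E : x = c * (x / c)) by (field; lra). rewrite E.
    apply Rmult_lt_compat_l; lra.
  - assert (E : y = (c * y) / c) by (field; lra). rewrite E.
    unfold Rdiv. apply Rmult_lt_compat_r; [apply Rinv_0_lt_compat; lra|lra].
Qed.

Lemma divge (x y c : R) : 0 < c -> y <= x / c -> c * y <= x.
Proof.
  intros Hc H.
  assert (E : x = c * (x / c)) by (field; lra). rewrite E.
  apply Rmult_le_compat_l; lra.
Qed.

Lemma divgt (x y c : R) : 0 < c -> y < x / c -> c * y < x.
Proof.
  intros Hc H.
  assert (E : x = c * (x / c)) by (field; lra). rewrite E.
  apply Rmult_lt_compat_l; lra.
Qed.

Lemma core al be ka a t r g eta : 0 < al -> al < be -> 0 < ka -> ka * (1 + al) <= al ->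
  ln 2 * a = ln (1 + al) - ka * ln al -> 0 <= r -> 0 < g -> 0 <= eta -> t = eta * g ->
  t * (ln 2 * Iref al be ka a r - ln 2 * Iref al be ka a (wp_alloc al be ka g eta * g))
    <= r - wp_alloc al be ka g eta * g.
Proof.
  intros Hal Hab Hk Hs hA Hr Hg He Ht.
  assert (Hkg : 0 < ka * g) by nra.
  assert (Hkt : ka * t = (ka * g) * eta) by (rewrite Ht; ring).
  assert (Ht0 : 0 <= t) by nra.
  unfold wp_alloc.
  destruct (Rle_dec (be / (ka * g)) eta) as [C1|C1].
  - apply divle in C1; [|lra].
    replace (be / g * g) with be by (field; lra).
    rewrite (Iref_2 al be ka a be) by lra.
    destruct (Rle_dec be r) as [D|D].
    + destruct (Req_dec r be) as [->|Dn].
      * rewrite (Iref_2 al be ka a be) by lra. lra.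
      * rewrite Iref_3 by lra. lra.
    + pose proof (B2 al be ka a r be Hal Hab Hk Hs hA Hr ltac:(lra)) as HB.
      set (D0 := ln 2 * Iref al be ka a r - ln 2 * a - ka * ln be) in *.
      assert (HD : D0 <= 0) by nra.
      assert (ka * (t * D0) <= ka * (r - be)) by nra.
      replace (t * (ln 2 * Iref al be ka a r - (ka * ln be + ln 2 * a))) with (t * D0)
        by (unfold D0; ring).
      nra.
  - apply Rnot_le_lt in C1. apply divgt in C1; [|lra].
    destruct (Rlt_dec (al / (ka * g)) eta) as [C2|C2].
    + apply divlt in C2; [|lra].
      replace (ka * eta * g) with (ka * t) by (rewrite Ht; ring).
      rewrite (Iref_2 al be ka a (ka * t)) by lra.
      pose proof (B2 al be ka a r (ka * t) Hal Hab Hk Hs hA Hr ltac:(lra)) as HB.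
      assert (ka * (t * (ln 2 * Iref al be ka a r - (ka * ln (ka * t) + ln 2 * a)))
              <= ka * (r - ka * t)) by nra.
      nra.
    + apply Rnot_lt_le in C2. apply divge in C2; [|lra].
      destruct (Rle_dec ((al + 1) / g) eta) as [C3|C3].
      * apply divle in C3; [|lra].
        replace (al / g * g) with al by (field; lra).
        rewrite (Iref_1 al be ka a al) by lra.
        assert (Ht1 : 1 + al <= t) by (rewrite Ht; nra).
        assert (Hkt2 : ka * t <= al) by lra.
        destruct (Rle_dec r al) as [D|D].
        -- rewrite Iref_1 by lra.
           pose proof (ln_tan (1 + r) (1 + al) ltac:(lra) ltac:(lra)) as T.
           set (X := ln (1 + r) - ln (1 + al)) in *.
           assert (X <= 0) by nra.
           nra.
        -- pose proof (B2 al be ka a r al Hal Hab Hk Hs hA Hr ltac:(lra)) as HB.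
           rewrite hA in HB.
           set (X := ln 2 * Iref al be ka a r - ln (1 + al)) in *.
           assert (HX : al * X <= ka * (r - al)) by (unfold X; nra).
           destruct (Rle_dec X 0). { nra. }
           assert (ka * t * X <= al * X) by nra.
           assert (ka * (t * X) <= ka * (r - al)) by nra.
           nra.
      * apply Rnot_le_lt in C3. apply divgt in C3; [|lra].
        destruct (Rle_dec (1 / g) eta) as [C4|C4].
        -- apply divle in C4; [|lra].
           replace ((eta - 1 / g) * g) with (t - 1) by (rewrite Ht; field; lra).
           assert (Ht1 : 1 <= t) by (rewrite Ht; nra).
           assert (Ht2 : t < 1 + al) by (rewrite Ht; nra).
           rewrite (Iref_1 al be ka a (t - 1)) by lra.
           replace (1 + (t - 1)) with t by ring.
           pose proof (B3 al be ka a r (t - 1) Hal Hab Hk Hs hA Hr ltac:(lra) ltac:(lra)) as HB.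
           replace (1 + (t - 1)) with t in HB by ring.
           lra.
        -- apply Rnot_le_lt in C4. apply divgt in C4; [|lra].
           assert (Ht1 : t < 1) by (rewrite Ht; nra).
           replace (0 * g) with 0 by ring.
           rewrite (Iref_1 al be ka a 0) by lra.
           replace (1 + 0) with 1 by ring. rewrite ln_1.
           pose proof (B3 al be ka a r 0 Hal Hab Hk Hs hA Hr ltac:(lra) ltac:(lra)) as HB.
           replace (1 + 0) with 1 in HB by ring. rewrite ln_1 in HB.
           pose proof (Iref_nonneg al be ka a r Hal Hab Hk hA Hr).
           nra.
Qed.

Lemma PW al be ka a p g eta : 0 < al -> al < be -> 0 < ka -> ka * (1 + al) <= al ->
  ln 2 * a = ln (1 + al) - ka * ln al -> 0 <= p -> 0 < g -> 0 <= eta ->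
  eta * (ln 2 * Iref al be ka a (p * g) - ln 2 * Iref al be ka a (wp_alloc al be ka g eta * g))
    <= p - wp_alloc al be ka g eta.
Proof.
  intros Hal Hab Hk Hs hA Hp Hg He.
  pose proof (core al be ka a (eta * g) (p * g) g eta Hal Hab Hk Hs hA ltac:(nra) Hg He eq_refl) as C.
  apply (Rmult_le_reg_l g); [lra|]. nra.
Qed.

Lemma wp_nonneg al be ka g eta : 0 < al -> al < be -> 0 < ka -> ka * (1 + al) <= al ->
  0 < g -> 0 <= wp_alloc al be ka g eta.
Proof.
  intros Hal Hab Hk Hs Hg.
  assert (Hkg : 0 < ka * g) by nra.
  unfold wp_alloc.
  destruct (Rle_dec (be / (ka * g)) eta) as [C1|C1].
  { left. apply Rdiv_lt_0_compat; lra. }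
  destruct (Rlt_dec (al / (ka * g)) eta) as [C2|C2].
  { apply divlt in C2; [|lra]. nra. }
  destruct (Rle_dec ((al + 1) / g) eta) as [C3|C3].
  { left. apply Rdiv_lt_0_compat; lra. }
  destruct (Rle_dec (1 / g) eta) as [C4|C4].
  { apply divle in C4; [|lra].
    assert (E : eta - 1 / g = (g * eta - 1) / g) by (field; lra). rewrite E.
    unfold Rdiv. apply Rmult_le_pos; [lra|left; apply Rinv_0_lt_compat; lra]. }
  lra.
Qed.

Lemma wp_neg al be ka g eta : 0 < al -> al < be -> 0 < ka -> 0 < g -> eta < 0 ->
  wp_alloc al be ka g eta = 0.
Proof.
  intros Hal Hab Hk Hg He.
  assert (Hkg : 0 < ka * g) by nra.
  unfold wp_alloc.
  destruct (Rle_dec (be / (ka * g)) eta) as [C1|C1].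
  { assert (0 < be / (ka * g)) by (apply Rdiv_lt_0_compat; lra). lra. }
  destruct (Rlt_dec (al / (ka * g)) eta) as [C2|C2].
  { assert (0 < al / (ka * g)) by (apply Rdiv_lt_0_compat; lra). lra. }
  destruct (Rle_dec ((al + 1) / g) eta) as [C3|C3].
  { assert (0 < (al + 1) / g) by (apply Rdiv_lt_0_compat; lra). lra. }
  destruct (Rle_dec (1 / g) eta) as [C4|C4].
  { assert (0 < 1 / g) by (apply Rdiv_lt_0_compat; lra). lra. }
  reflexivity.
Qed.

Lemma rsum_ext n f g : (forall b, (b < n)%nat -> f b = g b) -> rsum n f = rsum n g.
Proof.
  induction n as [|n IH]; intros H; simpl; [reflexivity|].
  rewrite IH by (intros; apply H; lia). rewrite H by lia. reflexivity.
Qed.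

Lemma rsum_le n f g : (forall b, (b < n)%nat -> f b <= g b) -> rsum n f <= rsum n g.
Proof.
  induction n as [|n IH]; intros H; simpl; [lra|].
  pose proof (IH ltac:(intros; apply H; lia)). pose proof (H n ltac:(lia)). lra.
Qed.

Lemma rsum_const n c : rsum n (fun _ => c) = INR n * c.
Proof.
  induction n as [|n IH]; cbn [rsum]; [simpl; ring|]. rewrite IH, S_INR. ring.
Qed.

Lemma rsum_lin n f g (c d : R) : rsum n (fun b => c * f b + d * g b) = c * rsum n f + d * rsum n g.
Proof.
  induction n as [|n IH]; simpl; [ring|]. rewrite IH. ring.
Qed.

Lemma rsum_term n f b : (forall i, (i < n)%nat -> 0 <= f i) -> (b < n)%nat -> f b <= rsum n f.
Proof.
  induction n as [|n IH]; intros H Hb; [lia|]. simpl.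
  destruct (Nat.eq_dec b n) as [->|Hn].
  - assert (0 <= rsum n f).
    { replace 0 with (rsum n (fun _ => 0)) by (rewrite rsum_const; ring).
      apply rsum_le. intros; apply H; lia. }
    lra.
  - pose proof (IH ltac:(intros; apply H; lia) ltac:(lia)). pose proof (H n ltac:(lia)). lra.
Qed.

Definition mx (c y : R) : R := (c + y + Rabs (y - c)) / 2.
Definition mn (c y : R) : R := (c + y - Rabs (y - c)) / 2.

Lemma mx_l c y : y <= c -> mx c y = c.
Proof. intros H. unfold mx. rewrite Rabs_left1 by lra. field. Qed.
Lemma mx_r c y : c <= y -> mx c y = y.
Proof. intros H. unfold mx. rewrite Rabs_pos_eq by lra. field. Qed.
Lemma mn_l c y : y <= c -> mn c y = y.
Proof. intros H. unfold mn. rewrite Rabs_left1 by lra. field. Qed.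
Lemma mn_r c y : c <= y -> mn c y = c.
Proof. intros H. unfold mn. rewrite Rabs_pos_eq by lra. field. Qed.

Lemma cont_ext f g x : (forall z, f z = g z) -> continuity_pt f x -> continuity_pt g x.
Proof.
  intros E H. unfold continuity_pt, continue_in, limit1_in, limit_in in *.
  intros eps He. destruct (H eps He) as [d [Hd Hd2]]. exists d. split; [exact Hd|].
  intros y Hy. rewrite <- !E. apply Hd2. exact Hy.
Qed.

Lemma cp_const c x : continuity_pt (fun _ => c) x.
Proof. apply continuity_pt_const. intros a b. reflexivity. Qed.

Lemma cp_id x : continuity_pt (fun y => y) x.
Proof. apply (derivable_continuous_pt id x (derivable_pt_id x)). Qed.

Lemma cp_plus f g x : continuity_pt f x -> continuity_pt g x -> continuity_pt (fun y => f y + g y) x.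
Proof. intros H1 H2. exact (continuity_pt_plus f g x H1 H2). Qed.

Lemma cp_minus f g x : continuity_pt f x -> continuity_pt g x -> continuity_pt (fun y => f y - g y) x.
Proof. intros H1 H2. exact (continuity_pt_minus f g x H1 H2). Qed.

Lemma cp_mult f g x : continuity_pt f x -> continuity_pt g x -> continuity_pt (fun y => f y * g y) x.
Proof. intros H1 H2. exact (continuity_pt_mult f g x H1 H2). Qed.

Lemma cp_abs f x : continuity_pt f x -> continuity_pt (fun y => Rabs (f y)) x.
Proof. intros H. exact (continuity_pt_comp f Rabs x H (Rcontinuity_abs (f x))). Qed.

Lemma cp_ln f x : continuity_pt f x -> 0 < f x -> continuity_pt (fun y => ln (f y)) x.
Proof.
  intros H Hp.
  exact (continuity_pt_comp f ln x H
    (derivable_continuous_pt ln (f x) (exist _ (/ f x) (derivable_pt_lim_ln (f x) Hp)))).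
Qed.

Lemma cp_log2 f x : continuity_pt f x -> 0 < f x -> continuity_pt (fun y => log2 (f y)) x.
Proof.
  intros H Hp. apply (cont_ext (fun y => ln (f y) * / ln 2)).
  { intros z. reflexivity. }
  apply cp_mult; [apply cp_ln; assumption|apply cp_const].
Qed.

Lemma cp_mx c f x : continuity_pt f x -> continuity_pt (fun y => mx c (f y)) x.
Proof.
  intros H. apply (cont_ext (fun y => (c + f y + Rabs (f y - c)) * / 2)).
  { intros z. reflexivity. }
  apply cp_mult; [|apply cp_const].
  apply cp_plus; [apply cp_plus; [apply cp_const|exact H]|].
  apply cp_abs. apply cp_minus; [exact H|apply cp_const].
Qed.

Lemma cp_mn c f x : continuity_pt f x -> continuity_pt (fun y => mn c (f y)) x.
Proof.
  intros H. apply (cont_ext (fun y => (c + f y - Rabs (f y - c)) * / 2)).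
  { intros z. reflexivity. }
  apply cp_mult; [|apply cp_const].
  apply cp_minus; [apply cp_plus; [apply cp_const|exact H]|].
  apply cp_abs. apply cp_minus; [exact H|apply cp_const].
Qed.

Definition Hf (al be ka t : R) : R :=
  log2 (1 + mn al (mx 0 (t - 1))) + ka * (log2 (mx al (mn be (ka * t))) - log2 al).

Lemma mx_ge c y : c <= mx c y.
Proof. destruct (Rle_dec y c); [rewrite mx_l|rewrite mx_r]; lra. Qed.
Lemma mx_ge2 c y : y <= mx c y.
Proof. destruct (Rle_dec y c); [rewrite mx_l|rewrite mx_r]; lra. Qed.

Lemma cp_Hf al be ka x : 0 < al -> continuity_pt (fun e => Hf al be ka e) x.
Proof.
  intros Hal. unfold Hf.
  apply cp_plus.
  - apply cp_log2.
    + apply cp_plus; [apply cp_const|]. apply cp_mn. apply cp_mx.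
      apply cp_minus; [apply cp_id|apply cp_const].
    + assert (0 <= mx 0 (x - 1)) by apply mx_ge.
      destruct (Rle_dec (mx 0 (x - 1)) al); [rewrite mn_l|rewrite mn_r]; lra.
  - apply cp_mult; [apply cp_const|]. apply cp_minus; [|apply cp_const].
    apply cp_log2.
    + apply cp_mx. apply cp_mn. apply cp_mult; [apply cp_const|apply cp_id].
    + pose proof (mx_ge al (mn be (ka * x))). lra.
Qed.

Lemma Ir1 al be ka a r : r <= al -> Iref al be ka a r = log2 (1 + r).
Proof. intros H. unfold Iref. destruct (Rle_dec r al); [reflexivity|lra]. Qed.
Lemma Ir2 al be ka a r : al < r -> r <= be -> Iref al be ka a r = ka * log2 r + a.
Proof. intros H1 H2. unfold Iref. destruct (Rle_dec r al); [lra|].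
  destruct (Rle_dec r be); [reflexivity|lra]. Qed.

Lemma H_eq al be ka a g eta : 0 < al -> al < be -> 0 < ka -> ka * (1 + al) <= al ->
  ka * log2 al + a = log2 (1 + al) -> 0 < g ->
  Iref al be ka a (wp_alloc al be ka g eta * g) = Hf al be ka (eta * g).
Proof.
  intros Hal Hab Hk Hs hc Hg.
  assert (Hkg : 0 < ka * g) by nra.
  set (t := eta * g).
  assert (Hkt : ka * t = (ka * g) * eta) by (unfold t; ring).
  unfold Hf, wp_alloc.
  destruct (Rle_dec (be / (ka * g)) eta) as [C1|C1].
  - apply divle in C1; [|lra].
    replace (be / g * g) with be by (field; lra).
    rewrite Ir2 by lra.
    assert (t > 1 + al) by nra.
    rewrite (mx_r 0 (t - 1)) by lra. rewrite (mn_r al (t - 1)) by lra.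
    rewrite (mn_r be (ka * t)) by lra. rewrite (mx_r al be) by lra. lra.
  - apply Rnot_le_lt in C1. apply divgt in C1; [|lra].
    destruct (Rlt_dec (al / (ka * g)) eta) as [C2|C2].
    + apply divlt in C2; [|lra].
      replace (ka * eta * g) with (ka * t) by (unfold t; ring).
      rewrite Ir2 by lra.
      assert (t > 1 + al) by nra.
      rewrite (mx_r 0 (t - 1)) by lra. rewrite (mn_r al (t - 1)) by lra.
      rewrite (mn_l be (ka * t)) by lra. rewrite (mx_r al (ka * t)) by lra. lra.
    + apply Rnot_lt_le in C2. apply divge in C2; [|lra].
      destruct (Rle_dec ((al + 1) / g) eta) as [C3|C3].
      * apply divle in C3; [|lra].
        replace (al / g * g) with al by (field; lra).
        rewrite Ir1 by lra.
        assert (t >= 1 + al) by (unfold t; nra).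
        rewrite (mx_r 0 (t - 1)) by lra. rewrite (mn_r al (t - 1)) by lra.
        rewrite (mn_l be (ka * t)) by lra. rewrite (mx_l al (ka * t)) by lra. lra.
      * apply Rnot_le_lt in C3. apply divgt in C3; [|lra].
        assert (t < 1 + al) by (unfold t; nra).
        destruct (Rle_dec (1 / g) eta) as [C4|C4].
        -- apply divle in C4; [|lra].
           replace ((eta - 1 / g) * g) with (t - 1) by (unfold t; field; lra).
           assert (t >= 1) by (unfold t; nra).
           rewrite Ir1 by lra.
           rewrite (mx_r 0 (t - 1)) by lra. rewrite (mn_l al (t - 1)) by lra.
           assert (ka * t < al) by nra.
           rewrite (mn_l be (ka * t)) by lra. rewrite (mx_l al (ka * t)) by lra. ring.
        -- apply Rnot_le_lt in C4. apply divgt in C4; [|lra].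
           assert (t < 1) by (unfold t; nra).
           replace (0 * g) with 0 by ring.
           rewrite Ir1 by lra.
           rewrite (mx_l 0 (t - 1)) by lra. rewrite (mn_l al 0) by lra.
           assert (ka * t < al) by nra.
           rewrite (mn_l be (ka * t)) by lra. rewrite (mx_l al (ka * t)) by lra. ring.
Qed.

Lemma cont_F (al be ka : R) (gamma : nat -> R) n x : 0 < al ->
  continuity_pt (fun e => rsum n (fun b => Hf al be ka (e * gamma b))) x.
Proof.
  intros Hal. induction n as [|n IH].
  - apply (cont_ext (fun _ => 0)); [intros; reflexivity|apply cp_const].
  - apply (cont_ext (fun e => rsum n (fun b => Hf al be ka (e * gamma b)) + Hf al be ka (e * gamma n))).
    { intros; reflexivity. }
    apply cp_plus; [exact IH|].
    exact (continuity_pt_comp (fun e => e * gamma n) (Hf al be ka) x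
             (cp_mult _ _ x (cp_id x) (cp_const _ x)) (cp_Hf al be ka _ Hal)).
Qed.

Lemma log2_1 : log2 1 = 0.
Proof. unfold log2. rewrite ln_1. unfold Rdiv. ring. Qed.

Lemma Hf0 al be ka x : 0 < al -> al < be -> Hf al be ka (0 * x) = 0.
Proof.
  intros Hal Hab. unfold Hf. rewrite !Rmult_0_l, Rmult_0_r.
  rewrite (mx_l 0 (0 - 1)) by lra. rewrite (mn_l al 0) by lra.
  rewrite (mn_l be 0) by lra. rewrite (mx_l al 0) by lra.
  replace (1 + 0) with 1 by ring. rewrite log2_1. ring.
Qed.
Theorem theorem8 (B : nat) (gamma : nat -> R) (alpha beta kappa a Rt : R)
  (hB : (0 < B)%nat)
  (hgamma : forall b, (b < B)%nat -> 0 < gamma b)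
  (halpha : 0 < alpha) (hab : alpha < beta) (hkappa : 0 < kappa)
  (hcont : kappa * log2 alpha + a = log2 (1 + alpha))
  (hslope : kappa * (1 + alpha) <= alpha)
  (hR0 : 0 < Rt) (hR1 : Rt < kappa * log2 beta + a) :
  (exists eta : R,
     rsum B (fun b => Iref alpha beta kappa a
                        (wp_alloc alpha beta kappa (gamma b) eta * gamma b))
     = INR B * Rt)
  /\
  (forall eta : R,
     rsum B (fun b => Iref alpha beta kappa a
                        (wp_alloc alpha beta kappa (gamma b) eta * gamma b))
     = INR B * Rt ->
     (* the allocation is feasible *)
     ((forall b, (b < B)%nat -> 0 <= wp_alloc alpha beta kappa (gamma b) eta) /\
      / INR B * rsum B (fun b => Iref alpha beta kappa a
                        (wp_alloc alpha beta kappa (gamma b) eta * gamma b)) >= Rt)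
     /\
     (* and optimal among all feasible allocations *)
     (forall p : nat -> R,
        (forall b, (b < B)%nat -> 0 <= p b) ->
        / INR B * rsum B (fun b => Iref alpha beta kappa a (p b * gamma b)) >= Rt ->
        / INR B * rsum B (fun b => wp_alloc alpha beta kappa (gamma b) eta)
        <= / INR B * rsum B p)).
Proof.
  assert (HB : 0 < INR B) by (apply lt_0_INR; exact hB).
  pose proof ln2_pos as HL.
  assert (hA : ln 2 * a = ln (1 + alpha) - kappa * ln alpha).
  { replace a with (log2 (1 + alpha) - kappa * log2 alpha) by lra.
    unfold log2. field. lra. }
  assert (Hs1 : kappa * (1 + alpha) <= alpha) by exact hslope.
  split.
  - set (F := fun e => rsum B (fun b => Hf alpha beta kappa (e * gamma b))).
    set (Y := 1 + rsum B (fun b => beta / (kappa * gamma b))).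
    assert (Hpos : forall b, (b < B)%nat -> 0 <= beta / (kappa * gamma b)).
    { intros b Hb. pose proof (hgamma b Hb). left. apply Rdiv_lt_0_compat; nra. }
    assert (HY : 0 < Y).
    { unfold Y. assert (0 <= rsum B (fun b => beta / (kappa * gamma b))).
      { replace 0 with (rsum B (fun _ => 0)) by (rewrite rsum_const; ring).
        apply rsum_le. exact Hpos. }
      lra. }
    assert (F0 : F 0 = 0).
    { unfold F. rewrite (rsum_ext _ _ (fun _ => 0)).
      - rewrite rsum_const; ring.
      - intros b Hb. apply Hf0; lra. }
    assert (FY : F Y = INR B * (kappa * log2 beta + a)).
    { unfold F. rewrite <- rsum_const. apply rsum_ext. intros b Hb.
      pose proof (hgamma b Hb) as Hg.
      rewrite <- (H_eq alpha beta kappa a (gamma b) Y) by lra.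
      assert (Hw : wp_alloc alpha beta kappa (gamma b) Y = beta / gamma b).
      { unfold wp_alloc. destruct (Rle_dec (beta / (kappa * gamma b)) Y) as [C|C];
          [reflexivity|].
        exfalso. apply C. pose proof (rsum_term _ _ b Hpos Hb). unfold Y. lra. }
      rewrite Hw. replace (beta / gamma b * gamma b) with beta by (field; lra).
      apply Ir2; lra. }
    assert (Hc : continuity (fun e => F e - INR B * Rt)).
    { intros x. apply cp_minus; [|apply cp_const]. unfold F. apply cont_F. exact halpha. }
    destruct (IVT (fun e => F e - INR B * Rt) 0 Y Hc HY) as [z [_ Hz]].
    + simpl. rewrite F0. nra.
    + simpl. rewrite FY. nra.
    + exists z. unfold F in Hz. rewrite (rsum_ext _ _ (fun b => Hf alpha beta kappa (z * gamma b))).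
      * lra.
      * intros b Hb. apply H_eq; try lra. apply hgamma; exact Hb.
  - intros eta Heq. split.
    + split.
      * intros b Hb. apply wp_nonneg; try lra. apply hgamma; exact Hb.
      * rewrite Heq. right. field. lra.
    + intros p Hp Hfeas.
      assert (He : 0 <= eta).
      { destruct (Rlt_dec eta 0) as [Hn|Hn]; [|lra]. exfalso.
        rewrite (rsum_ext _ _ (fun _ => 0)) in Heq.
        - rewrite rsum_const in Heq. nra.
        - intros b Hb. pose proof (hgamma b Hb).
          rewrite wp_neg by lra. rewrite Rmult_0_l. rewrite Ir1 by lra.
          replace (1 + 0) with 1 by ring. apply log2_1. }
      set (IP := rsum B (fun b => Iref alpha beta kappa a (p b * gamma b))) in *.
      set (IW := rsum B (fun b => Iref alpha beta kappa a
                   (wp_alloc alpha beta kappa (gamma b) eta * gamma b))) in *.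
      set (P := rsum B p).
      set (W := rsum B (fun b => wp_alloc alpha beta kappa (gamma b) eta)).
      assert (Hsum : (eta * ln 2) * IP + (- (eta * ln 2)) * IW <= 1 * P + (-1) * W).
      { unfold IP, IW, P, W. rewrite <- !rsum_lin. apply rsum_le. intros b Hb.
        pose proof (PW alpha beta kappa a (p b) (gamma b) eta halpha hab hkappa Hs1 hA
                      (Hp b Hb) (hgamma b Hb) He). lra. }
      assert (HIP : IP >= INR B * Rt).
      { assert (E : IP = INR B * (/ INR B * IP)) by (field; lra). rewrite E.
        apply Rle_ge. apply Rmult_le_compat_l; lra. }
      assert (0 <= eta * ln 2 * (IP - IW)).
      { apply Rmult_le_pos; [apply Rmult_le_pos; lra|lra]. }
      assert (W <= P) by lra.
      apply Rmult_le_compat_l; [left; apply Rinv_0_lt_compat; lra|lra].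
Qed.
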